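(* Let $n\ge1$, $\delta\in[0,1]$, $\bm{u}^*\in\mathcal{S}^{n-1}$, let $\mathcal{P}_u'$ be an arbitrary distribution on $\mathcal{S}^{n-1}$, and let $\mathcal{P}_{\bm{a},b}$ be a distribution on $\mathbb{R}^n_+\times\mathbb{R}_+$ such that for some $\underline{a}>0$, $a_i\in[\underline{a},1]$ almost surely for all $i$. For $t=1,\dots,T$, let $(\bm{u}_t,\bm{a}_t,b_t)$ be i.i.d., with $(\bm{a}_t,b_t)\sim\mathcal{P}_{\bm{a},b}$ independent of $\bm{u}_t$, and $\bm{u}_t=\bm{u}^*$ with probability $1-\delta$ and $\bm{u}_t\sim\mathcal{P}_u'$ with probability $\delta$. For $\bm{u}\in\mathbb{R}^n$, $\bm{a}\in\mathbb{R}^n_+$, $b\in\mathbb{R}_+$, let $\mathrm{LP}(\bm{u},\bm{a},b)$ be the linear program $\max_{\bm{x}}\sum_i u_ix_i$ s.t. $\sum_i a_ix_i\le b$, $0\le x_i\le1$, and fix a selection $\bm{x}^{\mathrm{opt}}(\bm{u},\bm{a},b)$ of an optimal solution. Let $\bm{x}^*_t=\bm{x}^{\mathrm{opt}}(\bm{u}_t,\bm{a}_t,b_t)$ and $\bar{\bm{x}}^*_t=\bm{x}^{\mathrm{opt}}(\bm{u}^*,\bm{a}_t,b_t)$, and define $$\mathcal{U}_t=\{\bm{u}\in\mathcal{S}^{n-1}:\bm{x}^*_t\text{ is an optimal solution of }\mathrm{LP}(\bm{u},\bm{a}_t,b_t)\},\qquad \bar{\mathcal{U}}_t=\{\bm{u}\in\mathcal{S}^{n-1}:\bar{\bm{x}}^*_t\text{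 is an optimal solution of }\mathrm{LP}(\bm{u},\bm{a}_t,b_t)\}.$$ Then $$\mathbb{P}\left(\max_{\bm{u}\in\mathcal{S}^{n-1}}\left|\frac1T\sum_{t=1}^TI_{\mathcal{U}_t}(\bm{u})-\frac1T\sum_{t=1}^TI_{\bar{\mathcal{U}}_t}(\bm{u})\right|\le\delta+\frac{\log T}{\sqrt T}\right)\ge1-\frac1T.$$
   Context: $\mathcal{S}^{n-1}$ is the unit sphere in $\mathbb{R}^n$; $I_{\mathcal{E}}(e)=1$ if $e\in\mathcal{E}$ and $0$ otherwise. *)

(* Defs.v *)
From HB Require Import structures.
From mathcomp Require Import all_boot all_order all_algebra.
From mathcomp Require Import all_classical all_reals all_analysis.
Set Implicit Arguments. Unset Strict Implicit. Unset Printing Implicit Defensive.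
Import Order.TTheory GRing.Theory Num.Theory.
Local Open Scope classical_set_scope.
Local Open Scope ring_scope.

(* Vectors of R^n are represented as n.-tuple R, which carries the product
   (Borel) sigma-algebra in mathcomp-analysis. *)
Section LP.
Variables (R : realType) (n : nat).

Definition dotv (u x : n.-tuple R) : R := \sum_(i < n) tnth u i * tnth x i.

Definition unit_sphere : set (n.-tuple R) :=
  [set u | \sum_(i < n) tnth u i ^+ 2 = 1].

Definition lp_feasible (a : n.-tuple R) (b : R) (x : n.-tuple R) : Prop :=
  dotv a x <= b /\ forall i, 0 <= tnth x i <= 1.

Definition lp_optimal (u a : n.-tuple R) (b : R) (x : n.-tuple R) : Prop :=
  lp_feasible a b x /\ forall y, lp_feasible a b y -> dotv u y <= dotv u x.

Definition lp_selection (xopt : n.-tuple R -> n.-tuple R -> R -> n.-tuple R) :=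
  forall u a b, (forall i, 0 <= tnth a i) -> 0 <= b -> lp_optimal u a b (xopt u a b).
End LP.

(* Mutual independence of the family of random elements
   {X_1,...,X_T, Y_1,...,Y_T} (product rule for all measurable sets; taking
   whole spaces for some indices gives the product rule for every subfamily). *)
Definition indep_two_families (R : realType) d (Om : measurableType d)
  (P : probability Om R) dU (U : measurableType dU) dV (V : measurableType dV)
  (T : nat) (X : 'I_T -> Om -> U) (Y : 'I_T -> Om -> V) : Prop :=
  forall (A : 'I_T -> set U) (B : 'I_T -> set V),
    (forall t, measurable (A t)) -> (forall t, measurable (B t)) ->
    P ((\bigcap_(t in [set: 'I_T]) (X t @^-1` A t)) `&`
       (\bigcap_(t in [set: 'I_T]) (Y t @^-1` B t))) =
    ((\prod_(t < T) P (X t @^-1` A t)) * (\prod_(t < T) P (Y t @^-1` B t)))%E.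

(* Main.v *)
Require Import Defs.
From HB Require Import structures.
From mathcomp Require Import all_boot all_order all_algebra.
From mathcomp Require Import all_classical all_reals all_analysis.
From mathcomp Require Import ring lra.
Import Order.TTheory GRing.Theory Num.Theory.
Import numFieldNormedType.Exports.
Local Open Scope classical_set_scope.
Local Open Scope ring_scope.

Section H.
Variable R : realType.

Lemma Dpos (p y : R) : 0 <= p <= 1 -> 0 < 1 - p + p * expR y.
Proof.
move=> /andP[p0 p1].
have e := expR_gt0 y.
have [->|pn0] := eqVneq p 0; first by rewrite mul0r subr0 addr0.
have pp : 0 < p by rewrite lt_def pn0.
have := mulr_gt0 pp e. lra.
Qed.

Lemma cont_of_der (f df : R -> R) (a b : R) : (forall x : R, is_derive x (1:R) f (df x)) ->
  {within [set` `[a, b]%R], continuous f}.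
Proof.
move=> H; apply: continuous_subspaceT => r.
have [d _] := H r.
exact/differentiable_continuous/derivable1_diffP.
Qed.

Lemma hoeff (p l : R) : 0 <= p <= 1 -> 0 <= l ->
  1 - p + p * expR l <= expR (p * l + l ^+ 2 / 8).
Proof.
move=> hp l0.
have /andP[p0 p1] := hp.
pose D y := 1 - p + p * expR y.
pose g y := p * expR y * (D y)^-1 - p - 4^-1 * y.
pose dg y := p * (1 - p) * expR y / (D y) ^+ 2 - 1 / 4.
have Dd (y : R) : is_derive y (1:R) D (p * expR y).
  have := is_deriveD (is_derive_cst (1-p) y (1:R)) (is_deriveZ p (is_derive_expR y)).
  move=> H; apply: is_derive_eq H _.
  by rewrite add0r.
have gd (y : R) : is_derive y (1:R) g (dg y).
  have Dn : D y != 0 by rewrite gt_eqF // Dpos.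
  have H := is_deriveB (is_deriveB (is_deriveM (is_deriveZ p (is_derive_expR y)) (is_deriveV Dn (Dd y))) (is_derive_cst p y (1:R))) (is_deriveZ (4^-1) (@is_derive_id _ _ y (1:R))).
  apply: is_derive_eq H _.
  rewrite /dg /D /=.
  have := @Dpos p y hp. set e := expR y => Dp.
  rewrite /GRing.scale /=. 
  field. lra.
have gle (x : R) : 0 <= x -> g x <= 0.
  move=> x0.
  have [c /andP[c0 cx] E] := MVT_segment x0 (fun z _ => gd z) (@cont_of_der g dg 0 x gd).
  have g0 : g 0 = 0.
    rewrite /g /D expR0 !mulr1 mulr0 subr0 addrNK invr1 mulr1; lra.
  have : dg c <= 0.
    rewrite /dg.
    have Dp := @Dpos p c hp.
    have ep := expR_gt0 c.
    rewrite subr_le0 ler_pdivrMr ?exprn_gt0 //.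
    set e := expR c. rewrite /D -/e. have := sqr_ge0 (1 - p - p * e). nra.
  move=> h; rewrite g0 !subr0 in E.
  have : g x = dg c * x by []. move=> ->. by rewrite mulr_le0_ge0.
pose s (y : R) := - (p * y + 8^-1 * (y * y)).
have sd (y : R) : is_derive y (1:R) s (- (p + 8^-1 * (y + y))).
  have H := is_deriveN (is_deriveD (is_deriveZ p (@is_derive_id _ _ y (1:R))) (is_deriveZ (8^-1) (is_deriveM (@is_derive_id _ _ y (1:R)) (@is_derive_id _ _ y (1:R))))).
  apply: is_derive_eq H _.
  rewrite /GRing.scale /=.
  by field.
pose phi (y : R) := D y * expR (s y).
pose dphi (y : R) := expR (s y) * (D y * g y).
have phid : forall z : R, is_derive z (1:R) phi (dphi z).
  move=> y.
  have H := is_deriveM (Dd y) (is_derive1_comp (is_derive_expR (s y)) (sd y)).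
  apply: is_derive_eq H _.
  rewrite /dphi /g /D /=.
  have := @Dpos p y hp. set e := expR y => Dp.
  rewrite /GRing.scale /=.
  field. lra.
have [c /andP[c0 cx] E] := MVT_segment l0 (fun z _ => phid z) (@cont_of_der phi dphi 0 l phid).
have phi0 : phi 0 = 1.
  rewrite /phi /s /D expR0 !mulr0 mulr1 addr0 oppr0 expR0; lra.
have : dphi c <= 0.
  rewrite /dphi; apply: mulr_ge0_le0; first exact: ltW (expR_gt0 _).
  apply: mulr_ge0_le0; first exact: ltW (@Dpos p c hp).
  exact: gle.
rewrite phi0 subr0 in E.
move=> h.
have : phi l <= 1.
  have : dphi c * l <= 0 by rewrite mulr_le0_ge0.
  rewrite -E; lra.
rewrite /phi /s.
have -> : p * l + l ^+ 2 / 8 = - - (p * l + 8^-1 * (l * l)) by rewrite opprK expr2; field.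
move: (- _) => q.
rewrite expRN.
have eq := expR_gt0 q.
rewrite -div1r ler_pdivlMr //.
Qed.
Lemma tail_bound (T : nat) (q dl c l : R) :
 0 <= q <= dl -> dl <= 1 -> 0 <= l ->
 \sum_(f : {ffun 'I_T -> bool} | c < (#|[pred t | f t]|)%:R)
    \prod_(t < T) (if f t then q else 1 - q)
  <= expR (- (l * c)) * expR (dl * l + l ^+ 2 / 8) ^+ T.
Proof.
move=> /andP[q0 qd] d1 l0.
pose x := expR l.
have x1 : 1 <= x by rewrite /x -expR0 ler_expR.
pose H (b : bool) := if b then q * x else 1 - q.
have Gge0 (b : bool) : 0 <= (if b then q else 1 - q) by case: b; lra.
have Hge0 (b : bool) : 0 <= H b by rewrite /H; case: b; nra.
have step (f : {ffun 'I_T -> bool}) : c < (#|[pred t | f t]|)%:R ->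
   \prod_(t < T) (if f t then q else 1 - q) <=
   expR (- (l * c)) * \prod_(t < T) H (f t).
  move=> cN.
  have -> : \prod_(t < T) H (f t) = \prod_(t < T) (if f t then q else 1 - q) * \prod_(t < T) (if f t then x else 1).
    rewrite -big_split /=; apply: eq_bigr => t _; rewrite /H; case: (f t); lra.
  have -> : \prod_(t < T) (if f t then x else 1) = expR ((#|[pred t | f t]|)%:R * l).
    rewrite expRM_natl -/x -prodr_const -big_mkcond /=.
    by apply: eq_bigl => t.
  set P0 := \prod_(t < T) _.
  have P0ge : 0 <= P0 by apply: prodr_ge0 => t _; exact: Gge0.
  rewrite mulrCA -expRD.
  have : 1 <= expR (- (l * c) + (#|[pred t | f t]|)%:R * l).
    rewrite -[leLHS]expR0 ler_expR.
    have := ltW cN. nra.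
  move=> h1.
  by rewrite ler_peMr.
apply: (le_trans (ler_sum _ (fun f => step f))).
apply: (le_trans (y := \sum_(f : {ffun 'I_T -> bool}) expR (- (l * c)) * \prod_(t < T) H (f t))).
  rewrite [leRHS](bigID (fun f : {ffun 'I_T -> bool} => c < (#|[pred t | f t]|)%:R)) /=.
  rewrite lerDl; apply: sumr_ge0 => f _; apply: mulr_ge0; first exact: ltW (expR_gt0 _).
  by apply: prodr_ge0 => t _.
rewrite -mulr_sumr; apply: ler_wpM2l; first exact: ltW (expR_gt0 _).
rewrite -(bigA_distr_bigA (fun (_ : 'I_T) (b : bool) => H b)) /=.
rewrite big_bool /= /H prodr_const card_ord.
apply: lerXn2r.
- by rewrite nnegrE; nra.
- by rewrite nnegrE; apply: ltW (expR_gt0 _).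
apply: (le_trans _ (@hoeff dl l _ l0)); last by apply/andP; split => //; lra.
rewrite -/x; nra.
Qed.

Lemma ln2_ge : 1 / 2 <= ln (2 : R).
Proof.
have h := expR_ge1Dx (- (1 / 2) : R).
rewrite expRN in h.
have e0 := expR_gt0 (1 / 2 : R).
have : expR (1 / 2 : R) <= 2.
  have hv : expR (1/2 : R) * (expR (1/2 : R))^-1 = 1 by rewrite mulfV // gt_eqF.
  move: h hv e0; move: (expR (1/2 : R)) => y; move: (y^-1) => z. nra.
move=> h2.
by rewrite -ler_expR lnK // posrE.
Qed.

Lemma final_num (T : nat) (dl : R) : (2 <= T)%N ->
  expR (- (4 * (ln T%:R / Num.sqrt T%:R) * (T%:R * (dl + ln T%:R / Num.sqrt T%:R))))
  * expR (dl * (4 * (ln T%:R / Num.sqrt T%:R)) + (4 * (ln T%:R / Num.sqrt T%:R)) ^+ 2 / 8) ^+ T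
  <= T%:R^-1.
Proof.
move=> T2.
have Tpos : (0 : R) < T%:R by rewrite ltr0n; apply: leq_trans T2.
have L2 : ln 2 <= ln (T%:R : R).
  by rewrite ler_ln ?posrE // ?ler_nat.
have L := ln2_ge.
rewrite -expRM_natl -expRD -[X in _ <= X^-1](lnK (x := T%:R)) ?posrE // -expRN ler_expR.
have sT := sqr_sqrtr (ltW Tpos).
have s0 : 0 < Num.sqrt (T%:R : R) by rewrite sqrtr_gt0.
move: sT s0. set s := Num.sqrt _. set LL := ln _. move=> sT s0.
rewrite -sT.
have -> : - (4 * (LL / s) * (s ^+ 2 * (dl + LL / s))) +
   s ^+ 2 * (dl * (4 * (LL / s)) + (4 * (LL / s)) ^+ 2 / 8) = - 2 * LL ^+ 2.
  by field; rewrite gt_eqF.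
have LLg : 1/2 <= LL by apply: (le_trans L); exact: L2.
have h1 : 0 <= LL - 1/2 by lra.
have h2 : 0 <= LL by lra.
have := mulr_ge0 h1 h2. nra.
Qed.

End H.

Lemma bigU_sub (R : realType) d (Om : measurableType d) (P : probability Om R)
  (I : finType) (Qp : pred I) (F : I -> set Om) :
  (forall i, measurable (F i)) ->
  (P (\big[setU/set0]_(i | Qp i) F i) <= \sum_(i | Qp i) P (F i))%E.
Proof.
move=> mF; elim: (index_enum I) => [|i r IH].
  by rewrite !big_nil measure0.
rewrite !big_cons; case: (Qp i) => //.
apply: (le_trans (measureU2 _ _ _)) => //.
  by apply: bigsetU_measurable => j _.
exact: leeD2l.
Qed.

Theorem proposition1 (R : realType) (d : measure_display) (Om : measurableType d)
  (P : probability Om R) (n T : nat) (delta : R) (ustar : n.-tuple R)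
  (Pu' : probability (n.-tuple R) R) (Pab : probability (n.-tuple R * R)%type R)
  (alo : R) (xopt : n.-tuple R -> n.-tuple R -> R -> n.-tuple R)
  (u : 'I_T -> Om -> n.-tuple R) (ab : 'I_T -> Om -> (n.-tuple R * R)%type) :
  (1 <= n)%N -> (1 <= T)%N ->
  0 <= delta <= 1 ->
  unit_sphere ustar ->
  Pu' (@unit_sphere R n) = 1%E ->
  0 < alo ->
  Pab [set p | (forall i, alo <= tnth p.1 i <= 1) /\ 0 <= p.2] = 1%E ->
  lp_selection xopt ->
  (forall t, measurable_fun setT (u t)) ->
  (forall t, measurable_fun setT (ab t)) ->
  (forall t B, measurable B ->
     P (u t @^-1` B) = ((1 - delta)%:E * \d_ustar B + delta%:E * Pu' B)%E) ->
  (forall t B, measurable B -> P (ab t @^-1` B) = Pab B) ->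
  indep_two_families P u ab ->
  let Ut t w := [set v | unit_sphere v /\
      lp_optimal v (ab t w).1 (ab t w).2 (xopt (u t w) (ab t w).1 (ab t w).2)] in
  let Ubart t w := [set v | unit_sphere v /\
      lp_optimal v (ab t w).1 (ab t w).2 (xopt ustar (ab t w).1 (ab t w).2)] in
  let E := [set w | forall v, unit_sphere v ->
      `| (T%:R)^-1 * \sum_(t < T) \1_(Ut t w) v
         - (T%:R)^-1 * \sum_(t < T) \1_(Ubart t w) v |
      <= delta + ln (T%:R) / Num.sqrt (T%:R)] in
  exists A : set Om, measurable A /\ A `<=` E /\ ((1 - (T%:R)^-1)%:E <= P A)%E.
Proof.
move=> n1 T1 hd us Pus alo0 Pab1 xsel um abm uP abP ind Ut Ubart E.
have [T2|T2] := leqP 2 T; last first.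
  exists set0; split; first exact: measurable0.
  split; first by [].
  have -> : T = 1%N by apply/eqP; rewrite eqn_leq T1 andbT -ltnS.
  by rewrite measure0 invr1 subrr.
pose eps := ln (T%:R : R) / Num.sqrt T%:R.
pose c := T%:R * (delta + eps).
have ms1 : measurable [set ustar].
  have -> : [set ustar] = \bigcap_(i in [set: 'I_n]) ((@tnth n R)^~ i @^-1` [set tnth ustar i]).
    apply/seteqP; split => v /=.
      by move=> -> i _.
    by move=> h; apply: eq_from_tnth => i; exact: (h i I).
  apply: fin_bigcap_measurable; first exact: finite_finset.
  move=> i _; rewrite -[X in measurable X]setTI.
  by apply: measurable_tnth => //; exact: measurable_set1.
have mpre t B : measurable B -> measurable (u t @^-1` B).
  by move=> mB; rewrite -[X in measurable X]setTI; exact: um.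
pose m := fine (Pu' [set ustar]).
have Pm : Pu' [set ustar] = m%:E.
  rewrite /m fineK // ge0_fin_numE ?measure_ge0 //.
  by apply: (le_lt_trans (probability_le1 _ ms1)); exact: ltry.
have m0 : 0 <= m by rewrite -lee_fin -Pm measure_ge0.
have m1 : m <= 1 by rewrite -lee_fin -Pm probability_le1.
have /andP[d0 d1] := hd.
pose q := delta - delta * m.
have Pgood t : P (u t @^-1` [set ustar]) = (1 - q)%:E.
  rewrite uP // Pm diracE mem_set //= -!EFinM -EFinD; congr (_%:E).
  rewrite /q; lra.
pose Bad := ~` [set ustar].
have Pbad t : P (u t @^-1` Bad) = q%:E.
  rewrite /Bad -preimage_setC probability_setC; last exact: mpre.
  by rewrite Pgood -EFinB; congr (_%:E); lra.
pose S (b : bool) := if b then Bad else [set ustar].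
have mS b : measurable (S b) by case: b => //; exact: measurableC.
have PS t b : P (u t @^-1` S b) = (if b then q else 1 - q)%:E.
  by case: b.
pose pat (f : {ffun 'I_T -> bool}) := \bigcap_(t in [set: 'I_T]) (u t @^-1` S (f t)).
have mpat f : measurable (pat f).
  apply: fin_bigcap_measurable; first exact: finite_finset.
  by move=> t _; apply: mpre.
have Ppat f : P (pat f) = (\prod_(t < T) (if f t then q else 1 - q))%:E.
  have := ind (fun t => S (f t)) (fun _ => setT) (fun t => mS _) (fun _ => measurableT).
  rewrite [X in _ `&` X]bigcapT // setIT => ->.
  rewrite [X in (_ * X)%E]big1 ?mule1; last by move=> t _; rewrite abP // probability_setT.
  rewrite -prodEFin; apply: eq_bigr => t _; exact: PS.
pose Q (f : {ffun 'I_T -> bool}) := c < (#|[pred t | f t]|)%:R.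
pose Ac := \big[setU/set0]_(f | Q f) pat f.
have mAc : measurable Ac by apply: bigsetU_measurable => f _.
have Tpos : (0 : R) < T%:R by rewrite ltr0n; apply: leq_trans T2.
have eps0 : 0 <= eps.
  rewrite /eps divr_ge0 ?sqrtr_ge0 // ln_ge0 // ler1n; exact: leq_trans T2.
exists (~` Ac); split; first exact: measurableC.
split.
  move=> w nw v sv.
  pose fw := [ffun t => u t w != ustar].
  have nQ : ~~ Q fw.
    apply/negP => Qf; apply: nw.
    rewrite /Ac (bigD1 fw) //=; left.
    move=> t _ /=; rewrite /S ffunE.
    by case: eqVneq => [e|ne] /=; [exact: e | exact/eqP].
  have Nc : (#|[pred t | fw t]|)%:R <= c by rewrite leNgt.
  have term t : `|\1_(Ut t w) v - \1_(Ubart t w) v| <= (if fw t then 1 else 0 : R).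
    rewrite ffunE; case: eqVneq => [e|ne] /=.
      by rewrite /Ut /Ubart e subrr normr0.
    rewrite !indicE; case: (v \in _); case: (v \in _) => /=;
      rewrite ?subrr ?normr0 ?subr0 ?sub0r ?normrN ?normr1 //.
  rewrite -mulrBr -sumrB normrM ger0_norm ?invr_ge0 ?ler0n //.
  apply: (le_trans (ler_wpM2l _ (ler_norm_sum _ _ _))); first by rewrite invr_ge0 ler0n.
  apply: (le_trans (ler_wpM2l _ (ler_sum _ (fun t _ => term t)))); first by rewrite invr_ge0 ler0n.
  rewrite -big_mkcond /= sumr_const.
  rewrite -(ler_pM2l Tpos) mulrA mulfV ?mul1r ?gt_eqF //.
rewrite probability_setC //.
have PAc : (P Ac <= (T%:R^-1)%:E)%E.
  apply: (le_trans (@bigU_sub _ _ _ P _ Q pat mpat)).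
  under eq_bigr => f _ do rewrite Ppat.
  rewrite sumEFin lee_fin.
  apply: (le_trans (@tail_bound R T q delta c (4 * eps) _ _ _)).
  - by apply/andP; split; rewrite /q; nra.
  - exact: d1.
  - rewrite mulr_ge0 //.
  exact: final_num.
have PAc0 : (0 <= P Ac)%E := measure_ge0 _ _.
move: PAc PAc0; case: (P Ac) => // r; rewrite !lee_fin => h1 h2.
lra.
Qed.
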